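(* Let $G$ be a finite group, $T$ a $G$-Tambara functor, $a\in T(G/H_1)$ and $b\in T(G/H_2)$. Then the product $\langle a\rangle\langle b\rangle$ is generated as a Tambara ideal by the set of all generalized products of $a$ and $b$.
   Context: All rings are commutative with unit. A $G$-Tambara functor $T$ consists of commutative rings $T(G/H)$ for subgroups $H\le G$, restriction ring maps $r^H_K$, additive transfers $t^H_K$, multiplicative norms $N^H_K$ ($K\le H$) and conjugation isomorphisms $c_{g,H}\colon T(G/H)\to T(G/gHg^{-1})$ satisfying the standard Tambara axioms (Hill–Mazur). A Tambara ideal is a family of ring ideals $I(G/H)\subseteq T(G/H)$ closed under restriction, transfer, norm and conjugation; $\langle x\rangle$ is the smallest Tambara ideal containing $x$ at its level. The product $IJ$ is the Tambara ideal generated by the levelwise products $I(G/H)J(G/H)$. A multiplicative translate of $x\in T(G/H)$ into $T(G/L)$ is an element $N^L_{gKg^{-1}}(c_{g,K}(r^H_K(x)))$ for some $K\le H$ and $g\in G$ with $gKg^{-1}\le L$. A generalized product of $x\in T(G/H_1)$ and $y\in T(G/H_2)$ is a product $\mu\nu\in T(G/L)$, for some $L\le G$, where $\mu$, $\nu$ are multiplicative translates of $x$, $y$ into $T(G/L)$. *)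

(* Defs.v *)
From HB Require Import structures.
From mathcomp Require Import all_boot all_order all_algebra all_fingroup.
Set Implicit Arguments. Unset Strict Implicit. Unset Printing Implicit Defensive.
Import GRing.Theory.

Local Open Scope ring_scope.

Section Tambara.
Variable gT : finGroupType.

Definition pickd (X : finType) (x0 : X) (A : {set X}) : X := odflt x0 [pick x in A].

(* the conjugate group g K g^-1 (mathcomp's  K :^ y  is  y^-1 K y) *)
Definition cgrp (g : gT) (K : {group gT}) : {group gT} := (K :^ (g^-1)%g)%G.

Definition dcosets (J K H : {set gT}) : {set {set gT}} :=
  [set ((J :* g) * K)%g | g in H].

(* ---- combinatorics of the Tambara reciprocity (exponential) formula ----
   For K <= H and a family L_i <= K (i < n), the G-set A = |_|_i G/L_i maps
   to G/K; a section over the fibre H/K of G/K -> G/H assigns to each left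
   coset C = hK of K in H a pair (i, D) with D a left coset of L_i inside C.
   Sections are encoded as finite functions on {set gT} (None off H/K).   *)
Definition secT n := {ffun {set gT} -> option ('I_n * {set gT})}.

Definition is_sec n (H K : {set gT}) (L : 'I_n -> {group gT}) (s : secT n) : bool :=
  [forall C, match s C with
             | Some p => [&& C \in lcosets K H, p.2 \in lcosets (L p.1) H
                           & p.2 \subset C]
             | None => C \notin lcosets K H
             end].

Definition sec_act n (h : gT) (s : secT n) : secT n :=
  [ffun C => omap (fun p => (p.1, (h *: p.2)%g)) (s ((h^-1) *: C)%g)].

Definition secs n H K (L : 'I_n -> {group gT}) : {set secT n} :=
  [set s | is_sec H K L s].

Definition sec_orbits n (H K : {set gT}) (L : 'I_n -> {group gT}) : {set {set secT n}} :=
  [set [set sec_act h s | h in H] | s in secs H K L].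

(* stabilizer of a section in H (a subgroup; <<_>> just provides the group
   structure, it does not change the set) *)
Definition sec_stab n (H : {set gT}) (s : secT n) : {group gT} :=
  (<< [set h in H | sec_act h s == s] >>)%G.

Definition coset_orbits (S K H : {set gT}) : {set {set {set gT}}} :=
  [set [set (x *: C)%g | x in S] | C in lcosets K H].

Record tambara_data := TambaraData {
  T :> {group gT} -> comPzRingType;
  (* res H K = r^H_K : T(G/H) -> T(G/K); meaningful when K <= H *)
  res : forall H K : {group gT}, T H -> T K;
  (* tr H K = t^H_K : T(G/K) -> T(G/H); meaningful when K <= H *)
  tr : forall H K : {group gT}, T K -> T H;
  (* nm H K = N^H_K : T(G/K) -> T(G/H); meaningful when K <= H *)
  nm : forall H K : {group gT}, T K -> T H;
  (* cj g H K = c_{g,H} : T(G/H) -> T(G/gHg^-1); meaningful when K = gHg^-1 *)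
  cj : gT -> forall H K : {group gT}, T H -> T K
}.
Arguments res : clear implicits.
Arguments tr : clear implicits.
Arguments nm : clear implicits.
Arguments cj : clear implicits.

Variable G : {group gT}.
Implicit Types (H K J : {group gT}) (g h : gT).

Section TAx.
Variable Tf : tambara_data.
Local Notation T := (T Tf).
Local Notation res := (@res Tf).
Local Notation tr := (@tr Tf).
Local Notation nm := (@nm Tf).
Local Notation cj := (@cj Tf).

(* the summand of the reciprocity formula attached to an S-orbit Om of H/K *)
Definition recip_factor n (L : 'I_n -> {group gT}) (a : forall i, T (L i))
    (S : {group gT}) (s : secT n) (Om : {set {set gT}}) : T S :=
  match s (pickd set0 Om) with
  | Some p =>
      let g := repr p.2 in
      nm S (S :&: cgrp g (L p.1))%G
        (res (cgrp g (L p.1)) (S :&: cgrp g (L p.1))%G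
           (cj g (L p.1) (cgrp g (L p.1)) (a p.1)))
  | None => 1
  end.

Definition tambara_axioms : Prop :=
  (forall H K, K \subset H -> H \subset G ->
     [/\ forall x y, res H K (x + y) = res H K x + res H K y,
         forall x y, res H K (x * y) = res H K x * res H K y
       & res H K 1 = 1]) /\
  (forall H (x : T H), H \subset G -> res H H x = x) /\
  (forall H K J x, J \subset K -> K \subset H -> H \subset G ->
     res K J (res H K x) = res H J x) /\
  (forall H K, K \subset H -> H \subset G ->
     forall x y, tr H K (x + y) = tr H K x + tr H K y) /\
  (forall H (x : T H), H \subset G -> tr H H x = x) /\
  (forall H K J x, J \subset K -> K \subset H -> H \subset G ->
     tr H K (tr K J x) = tr H J x) /\
  (forall H K, K \subset H -> H \subset G ->
     (forall x y, nm H K (x * y) = nm H K x * nm H K y) /\ nm H K 1 = 1) /\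
  (forall H (x : T H), H \subset G -> nm H H x = x) /\
  (forall H K J x, J \subset K -> K \subset H -> H \subset G ->
     nm H K (nm K J x) = nm H J x) /\
  (forall g H, g \in G -> H \subset G ->
     [/\ forall x y, cj g H (cgrp g H) (x + y) = cj g H (cgrp g H) x + cj g H (cgrp g H) y,
         forall x y, cj g H (cgrp g H) (x * y) = cj g H (cgrp g H) x * cj g H (cgrp g H) y
       & cj g H (cgrp g H) 1 = 1]) /\
  (forall g H (x : T H), H \subset G -> g \in H -> cj g H H x = x) /\
  (forall g h H x, g \in G -> h \in G -> H \subset G ->
     cj g (cgrp h H) (cgrp g (cgrp h H)) (cj h H (cgrp h H) x)
     = cj (g * h)%g H (cgrp g (cgrp h H)) x) /\
  (forall g H K x, g \in G -> K \subset H -> H \subset G ->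
     cj g K (cgrp g K) (res H K x) = res (cgrp g H) (cgrp g K) (cj g H (cgrp g H) x)) /\
  (forall g H K x, g \in G -> K \subset H -> H \subset G ->
     cj g H (cgrp g H) (tr H K x) = tr (cgrp g H) (cgrp g K) (cj g K (cgrp g K) x)) /\
  (forall g H K x, g \in G -> K \subset H -> H \subset G ->
     cj g H (cgrp g H) (nm H K x) = nm (cgrp g H) (cgrp g K) (cj g K (cgrp g K) x)) /\
  (forall H J K x, J \subset H -> K \subset H -> H \subset G ->
     res H J (tr H K x) =
     \sum_(D in dcosets J K H)
        tr J (J :&: cgrp (repr D) K)%G
          (res (cgrp (repr D) K) (J :&: cgrp (repr D) K)%G
             (cj (repr D) K (cgrp (repr D) K) x))) /\
  (forall H J K x, J \subset H -> K \subset H -> H \subset G ->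
     res H J (nm H K x) =
     \prod_(D in dcosets J K H)
        nm J (J :&: cgrp (repr D) K)%G
          (res (cgrp (repr D) K) (J :&: cgrp (repr D) K)%G
             (cj (repr D) K (cgrp (repr D) K) x))) /\
  (forall H K x y, K \subset H -> H \subset G ->
     tr H K (x * res H K y) = tr H K x * y) /\
  (* Tambara reciprocity (distributive law along exponential diagrams):
     N^H_K (sum_i t^K_{L_i} a_i) =
       sum_{[s] in H\Sections} t^H_{S_s} prod_{[C] in S_s\(H/K)}
          N^{S_s}_{S_s \cap gL_ig^-1} r c_g (a_i)   where s(C) = (i, gL_i) *)
  (forall H K n (L : 'I_n -> {group gT}) (a : forall i, T (L i)),
     K \subset H -> H \subset G -> (forall i, L i \subset K) ->
     nm H K (\sum_(i < n) tr K (L i) (a i)) =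
     \sum_(O in sec_orbits H K L)
        tr H (sec_stab H (pickd [ffun=> None] O))
          (\prod_(Om in coset_orbits (sec_stab H (pickd [ffun=> None] O)) K H)
             recip_factor a (sec_stab H (pickd [ffun=> None] O))
               (pickd [ffun=> None] O) Om)).

End TAx.

Record tambara := Tambara {
  tambara_d :> tambara_data;
  tambara_ax : tambara_axioms tambara_d
}.

Section Ideals.
Variable Tf : tambara.
Local Notation T := (T Tf).
Local Notation res := (@res Tf).
Local Notation tr := (@tr Tf).
Local Notation nm := (@nm Tf).
Local Notation cj := (@cj Tf).

Definition tfamily := forall H : {group gT}, T H -> Prop.

Definition ring_ideal (R : comPzRingType) (P : R -> Prop) : Prop :=
  [/\ P 0, forall x y, P x -> P y -> P (x + y) & forall r x, P x -> P (r * x)].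

Definition tambara_ideal (I : tfamily) : Prop :=
  [/\ forall H, H \subset G -> ring_ideal (I H),
      forall H K x, K \subset H -> H \subset G -> I H x -> I K (res H K x),
      forall H K x, K \subset H -> H \subset G -> I K x -> I H (tr H K x),
      forall H K x, K \subset H -> H \subset G -> I K x -> I H (nm H K x)
    & forall g H x, g \in G -> H \subset G -> I H x -> I (cgrp g H) (cj g H (cgrp g H) x)].

Definition tideal_gen (S : tfamily) : tfamily :=
  fun H z => forall I, tambara_ideal I ->
    (forall K, K \subset G -> forall x, S K x -> I K x) -> I H z.

Definition tideal_prin (H0 : {group gT}) (x : T H0) : tfamily :=
  fun H z => forall I, tambara_ideal I -> I H0 x -> I H z.

Definition tideal_prod (I J : tfamily) : tfamily :=
  tideal_gen (fun H z => exists n (u v : 'I_n -> T H),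
                (forall k, I H (u k) /\ J H (v k)) /\ z = \sum_(k < n) u k * v k).

Definition mult_translate (H : {group gT}) (x : T H) (L : {group gT}) (m : T L) : Prop :=
  exists (K : {group gT}) (g : gT),
    [/\ K \subset H, g \in G, cgrp g K \subset L &
        m = nm L (cgrp g K) (cj g K (cgrp g K) (res H K x))].

Definition gen_products (H1 : {group gT}) (x : T H1) (H2 : {group gT}) (y : T H2) : tfamily :=
  fun L z => L \subset G /\ exists mu nu,
    [/\ mult_translate x mu, mult_translate y nu & z = mu * nu].

End Ideals.
End Tambara.

Arguments tideal_gen {gT G Tf} S H _.
Arguments tideal_prin {gT G Tf H0} x H _.
Arguments tideal_prod {gT G Tf} I J H _.
Arguments gen_products {gT G Tf H1} x {H2} y H _.

(* Main.v *)
Require Import Defs.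
From mathcomp Require Import all_boot all_order all_algebra all_fingroup.
Set Implicit Arguments. Unset Strict Implicit. Unset Printing Implicit Defensive.
Import GRing.Theory.
Local Open Scope ring_scope.

Section P.
Variables (gT : finGroupType) (G : {group gT}) (Tf : tambara G).
Implicit Types (H K J L Y X : {group gT}) (g h c : gT).
Local Notation TR H K := (@tr gT (tambara_d Tf) H K).
Local Notation NM H K := (@nm gT (tambara_d Tf) H K).
Local Notation CJ g H K := (@cj gT (tambara_d Tf) g H K).
Local Notation RES H K := (@res gT (tambara_d Tf) H K).

Ltac ax := case: (tambara_ax Tf) => A1 [A2 [A3 [A4 [A5 [A6 [A7 [A8 [A9 [A10 [A11 [A12 [A13 [A14 [A15 [A16 [A17 [A18 A19]]]]]]]]]]]]]]]]].

Lemma resD H K (x y : Tf H) : K \subset H -> H \subset G -> RES H K (x + y) = RES H K x + RES H K y.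
Proof. by ax => sKH sHG; case: (A1 H K sKH sHG). Qed.
Lemma resM H K (x y : Tf H) : K \subset H -> H \subset G -> RES H K (x * y) = RES H K x * RES H K y.
Proof. by ax => sKH sHG; case: (A1 H K sKH sHG). Qed.
Lemma resid H (x : Tf H) : H \subset G -> RES H H x = x.
Proof. by ax; apply: A2. Qed.
Lemma resres H K J (x : Tf H) : J \subset K -> K \subset H -> H \subset G -> RES K J (RES H K x) = RES H J x.
Proof. by ax; apply: A3. Qed.
Lemma trD H K (x y : Tf K) : K \subset H -> H \subset G -> TR H K (x + y) = TR H K x + TR H K y.
Proof. by ax => ??; apply: A4. Qed.
Lemma tr0 H K : K \subset H -> H \subset G -> TR H K 0 = 0.
Proof. by move=> s1 s2; apply: (addrI (TR H K 0)); rewrite addr0 -trD // addr0. Qed.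
Lemma res0 H K : K \subset H -> H \subset G -> RES H K 0 = 0.
Proof. by move=> s1 s2; apply: (addrI (RES H K 0)); rewrite addr0 -resD // addr0. Qed.
Lemma trtr H K J (x : Tf J) : J \subset K -> K \subset H -> H \subset G -> TR H K (TR K J x) = TR H J x.
Proof. by ax; apply: A6. Qed.
Lemma trid H (x : Tf H) : H \subset G -> TR H H x = x.
Proof. by ax; apply: A5. Qed.
Lemma nmM H K (x y : Tf K) : K \subset H -> H \subset G -> NM H K (x * y) = NM H K x * NM H K y.
Proof. by ax => sKH sHG; case: (A7 H K sKH sHG). Qed.
Lemma nmid H (x : Tf H) : H \subset G -> NM H H x = x.
Proof. by ax; apply: A8. Qed.
Lemma nmnm H K J (x : Tf J) : J \subset K -> K \subset H -> H \subset G -> NM H K (NM K J x) = NM H J x.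
Proof. by ax; apply: A9. Qed.
Lemma cjD g H (x y : Tf H) : g \in G -> H \subset G -> CJ g H (cgrp g H) (x + y) = CJ g H (cgrp g H) x + CJ g H (cgrp g H) y.
Proof. by ax => gG sHG; case: (A10 g H gG sHG). Qed.
Lemma cj0 g H : g \in G -> H \subset G -> CJ g H (cgrp g H) 0 = 0.
Proof. by move=> s1 s2; apply: (addrI (CJ g H (cgrp g H) 0)); rewrite addr0 -cjD // addr0. Qed.
Lemma cjM g H (x y : Tf H) : g \in G -> H \subset G -> CJ g H (cgrp g H) (x * y) = CJ g H (cgrp g H) x * CJ g H (cgrp g H) y.
Proof. by ax => gG sHG; case: (A10 g H gG sHG). Qed.
Lemma cjid g H (x : Tf H) : H \subset G -> g \in H -> CJ g H H x = x.
Proof. by ax; apply: A11. Qed.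
Lemma cjcj g h H (x : Tf H) : g \in G -> h \in G -> H \subset G ->
     CJ g (cgrp h H) (cgrp g (cgrp h H)) (CJ h H (cgrp h H) x)
     = CJ (g * h)%g H (cgrp g (cgrp h H)) x.
Proof. by ax; apply: A12. Qed.
Lemma cjres g H K (x : Tf H) : g \in G -> K \subset H -> H \subset G ->
     CJ g K (cgrp g K) (RES H K x) = RES (cgrp g H) (cgrp g K) (CJ g H (cgrp g H) x).
Proof. by ax; apply: A13. Qed.
Lemma cjtr g H K (x : Tf K) : g \in G -> K \subset H -> H \subset G ->
     CJ g H (cgrp g H) (TR H K x) = TR (cgrp g H) (cgrp g K) (CJ g K (cgrp g K) x).
Proof. by ax; apply: A14. Qed.
Lemma cjnm g H K (x : Tf K) : g \in G -> K \subset H -> H \subset G ->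
     CJ g H (cgrp g H) (NM H K x) = NM (cgrp g H) (cgrp g K) (CJ g K (cgrp g K) x).
Proof. by ax; apply: A15. Qed.
Lemma mackeyA H J K (x : Tf K) : J \subset H -> K \subset H -> H \subset G ->
     RES H J (TR H K x) =
     \sum_(D in dcosets J K H)
        TR J (J :&: cgrp (repr D) K)%G
          (RES (cgrp (repr D) K) (J :&: cgrp (repr D) K)%G
             (CJ (repr D) K (cgrp (repr D) K) x)).
Proof. by ax; apply: A16. Qed.
Lemma mackeyM H J K (x : Tf K) : J \subset H -> K \subset H -> H \subset G ->
     RES H J (NM H K x) =
     \prod_(D in dcosets J K H)
        NM J (J :&: cgrp (repr D) K)%G
          (RES (cgrp (repr D) K) (J :&: cgrp (repr D) K)%G
             (CJ (repr D) K (cgrp (repr D) K) x)).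
Proof. by ax; apply: A17. Qed.
Lemma frob H K (x : Tf K) (y : Tf H) : K \subset H -> H \subset G ->
     TR H K (x * RES H K y) = TR H K x * y.
Proof. by ax; apply: A18. Qed.
Lemma recip H K n (L : 'I_n -> {group gT}) (a : forall i, Tf (L i)) :
     K \subset H -> H \subset G -> (forall i, L i \subset K) ->
     NM H K (\sum_(i < n) TR K (L i) (a i)) =
     \sum_(O in sec_orbits H K L)
        TR H (sec_stab H (pickd [ffun=> None] O))
          (\prod_(Om in coset_orbits (sec_stab H (pickd [ffun=> None] O)) K H)
             recip_factor a (sec_stab H (pickd [ffun=> None] O))
               (pickd [ffun=> None] O) Om).
Proof. by ax; apply: A19. Qed.

Lemma cgrp1 H : cgrp 1%g H = H.
Proof. by apply: val_inj; rewrite /= invg1 conjsg1. Qed.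
Lemma cgrpM g h H : cgrp g (cgrp h H) = cgrp (g * h)%g H.
Proof. by apply: val_inj; rewrite /= -conjsgM invMg. Qed.
Lemma cgrpK c Y : cgrp c (cgrp (c^-1)%g Y) = Y.
Proof. by apply: val_inj; rewrite /= invgK conjsgK. Qed.
Lemma cgrpS g H K : (cgrp g H \subset cgrp g K) = (H \subset K).
Proof. by rewrite /= conjSg. Qed.
Lemma cgrpG g H : g \in G -> H \subset G -> cgrp g H \subset G.
Proof. by move=> gG sHG; rewrite /= sub_conjg invgK conjGid. Qed.


Section MS.
Variables (H0 : {group gT}) (x : Tf H0).
Hypothesis sH0G : H0 \subset G.

Inductive mstar L : Tf L -> Prop :=
| ms1 (m : Tf L) : mult_translate x m -> mstar m
| msM (u v : Tf L) : mstar u -> mstar v -> mstar (u * v).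

Lemma mt_nm K L (m : Tf L) : L \subset K -> K \subset G -> mult_translate x m -> mult_translate x (NM K L m).
Proof.
move=> sLK sKG [K' [g [sK' gG sX ->]]].
exists K', g; split => //; first exact: subset_trans sX sLK.
by rewrite nmnm.
Qed.

Lemma mt_cj c L (m : Tf L) : c \in G -> L \subset G -> mult_translate x m ->
  mult_translate x (CJ c L (cgrp c L) m).
Proof.
move=> cG sLG [K [g [sK gG sX ->]]].
have sKG : K \subset G := subset_trans sK sH0G.
rewrite cjnm // cjcj // cgrpM.
exists K, (c * g)%g; split => //; first by rewrite groupM.
by rewrite -cgrpM cgrpS.
Qed.

Lemma mt_res_gen c K' J : c \in G -> K' \subset H0 -> J \subset G ->
  mult_translate x (NM J (J :&: cgrp c K')%G (RES (cgrp c K') (J :&: cgrp c K')%G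
     (CJ c K' (cgrp c K') (RES H0 K' x)))).
Proof.
move=> cG sKH0 sJG.
set Y := (J :&: cgrp c K')%G.
have sYc : Y \subset cgrp c K' by rewrite /Y /= subsetIr.
pose K2 := cgrp (c^-1)%g Y.
have E : cgrp c K2 = Y := cgrpK c Y.
have sK2 : K2 \subset K' by rewrite -(cgrpS c) E.
have sK'G : K' \subset G := subset_trans sKH0 sH0G.
exists K2, c; split => //.
- exact: subset_trans sK2 sKH0.
- by rewrite E /Y /= subsetIl.
rewrite -(resres x sK2 sKH0 sH0G) (cjres _ cG sK2 sK'G).
by rewrite E.
Qed.

Lemma ms_prod (I : finType) (A : {set I}) (i0 : I) L (F : I -> Tf L) :
  i0 \in A -> (forall i, i \in A -> mstar (F i)) -> mstar (\prod_(i in A) F i).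
Proof.
move=> iA HF; rewrite (bigD1 i0) //=.
have : mstar (\prod_(i in A | i != i0) F i) \/ \prod_(i in A | i != i0) F i = 1.
  apply: (big_ind (fun z => mstar z \/ z = 1)); first by right.
    move=> u v [mu|->] [mv|->]; rewrite ?mulr1 ?mul1r; auto.
    by left; apply: msM.
  by move=> i /andP[iA' _]; left; apply: HF.
case=> [h|->]; last by rewrite mulr1; apply: HF.
by apply: msM => //; apply: HF.
Qed.

Lemma mt_res L J (m : Tf L) : J \subset L -> L \subset G -> mult_translate x m ->
  mstar (RES L J m).
Proof.
move=> sJL sLG [K [g [sK gG sX ->]]].
have sKG : K \subset G := subset_trans sK sH0G.
have sJG : J \subset G := subset_trans sJL sLG.
rewrite mackeyM //.
apply: (ms_prod (i0 := ((J :* 1%g) * cgrp g K)%g)).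
  by apply/imsetP; exists 1%g.
move=> D /imsetP [g0 g0L ->].
set d := repr _.
have dL : d \in L.
  have : d \in ((J :* g0) * cgrp g K)%g.
    apply: (mem_repr g0); rewrite -[g0]mulg1; apply: mem_mulg => //.
    by rewrite mulg1 rcoset_refl.
  case/mulsgP => y z /rcosetP[j Jj ->] Xz ->.
  rewrite !groupM //; [exact: (subsetP sJL) | exact: (subsetP sX)].
have dG : d \in G := subsetP sLG _ dL.
rewrite cjcj // cgrpM.
apply: ms1; apply: mt_res_gen => //; exact: groupM.
Qed.

Lemma ms_res L J (m : Tf L) : J \subset L -> L \subset G -> mstar m -> mstar (RES L J m).
Proof.
move=> sJL sLG; elim=> [m' h|u v _ IHu _ IHv]; first exact: mt_res.
by rewrite resM //; apply: msM.
Qed.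

Lemma ms_cj c L (m : Tf L) : c \in G -> L \subset G -> mstar m -> mstar (CJ c L (cgrp c L) m).
Proof.
move=> cG sLG; elim=> [m' h|u v _ IHu _ IHv]; first by apply: ms1; apply: mt_cj.
by rewrite cjM //; apply: msM.
Qed.

Lemma ms_nm K L (m : Tf L) : L \subset K -> K \subset G -> mstar m -> mstar (NM K L m).
Proof.
move=> sLK sKG; elim=> [m' h|u v _ IHu _ IHv]; first by apply: ms1; apply: mt_nm.
by rewrite nmM //; apply: msM.
Qed.


Lemma repr_dcoset J X L D : J \subset L -> X \subset L -> D \in dcosets J X L -> repr D \in L.
Proof.
move=> sJL sXL /imsetP [g0 g0L ->].
have : repr ((J :* g0) * X)%g \in ((J :* g0) * X)%g.
  apply: (mem_repr g0); rewrite -[g0]mulg1; apply: mem_mulg => //.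
  by rewrite mulg1 rcoset_refl.
case/mulsgP => y z /rcosetP[j Jj ->] Xz ->.
rewrite !groupM //; [exact: (subsetP sJL) | exact: (subsetP sXL)].
Qed.

Inductive Aset K : Tf K -> Prop :=
| A0 : Aset 0
| AD (u v : Tf K) : Aset u -> Aset v -> Aset (u + v)
| A1 L (m s : Tf L) : L \subset K -> mstar m -> Aset (TR K L (m * s)).

Lemma Aset_sum K (I : Type) (r : seq I) (P : pred I) (F : I -> Tf K) :
  (forall i, P i -> Aset (F i)) -> Aset (\sum_(i <- r | P i) F i).
Proof. move=> h; apply: big_ind => //; [exact: A0 | exact: AD]. Qed.

Lemma Aset_mul K (r z : Tf K) : K \subset G -> Aset z -> Aset (r * z).
Proof.
move=> sKG; elim=> [|u v _ hu _ hv|L m s sLK hm].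
- by rewrite mulr0; apply: A0.
- by rewrite mulrDr; apply: AD.
- by rewrite mulrC -frob // -mulrA; apply: A1.
Qed.

Lemma Aset_res K J (z : Tf K) : J \subset K -> K \subset G -> Aset z -> Aset (RES K J z).
Proof.
move=> sJK sKG; elim=> [|u v _ hu _ hv|L m s sLK hm].
- by rewrite res0 //; apply: A0.
- by rewrite resD //; apply: AD.
have sLG : L \subset G := subset_trans sLK sKG.
rewrite mackeyA //; apply: Aset_sum => D DI.
have dK := repr_dcoset sJK sLK DI.
have dG : repr D \in G := subsetP sKG _ dK.
rewrite cjM // resM; [|by rewrite /= subsetIr|exact: cgrpG].
apply: A1; first by rewrite /= subsetIl.
apply: ms_res; [by rewrite /= subsetIr | exact: cgrpG | exact: ms_cj].
Qed.

Lemma Aset_tr H K (z : Tf K) : K \subset H -> H \subset G -> Aset z -> Aset (TR H K z).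
Proof.
move=> sKH sHG; elim=> [|u v _ hu _ hv|L m s sLK hm].
- by rewrite tr0 //; apply: A0.
- by rewrite trD //; apply: AD.
rewrite trtr //; apply: A1 => //; exact: subset_trans sLK sKH.
Qed.

Lemma Aset_cj c K (z : Tf K) : c \in G -> K \subset G -> Aset z -> Aset (CJ c K (cgrp c K) z).
Proof.
move=> cG sKG; elim=> [|u v _ hu _ hv|L m s sLK hm].
- by rewrite cj0 //; apply: A0.
- by rewrite cjD //; apply: AD.
have sLG : L \subset G := subset_trans sLK sKG.
rewrite cjtr // cjM //; apply: A1; first by rewrite cgrpS.
exact: ms_cj.
Qed.

Lemma Aset_x : Aset x.
Proof.
have -> : x = TR H0 H0 (x * 1) by rewrite mulr1 trid.
apply: A1 => //; apply: ms1; exists H0, 1%g; split => //; first by rewrite cgrp1.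
by rewrite cgrp1 nmid // cjid // resid.
Qed.


Definition entry := {L : {group gT} & (Tf L * Tf L)%type}.
Definition d0 : entry := existT _ 1%G (0, 0).
Definition eF K (p : entry) : Tf K := TR K (tag p) ((tagged p).1 * (tagged p).2).

Lemma Aset_list K (z : Tf K) : Aset z -> exists l : seq entry,
  (forall i, (i < size l)%N -> tag (nth d0 l i) \subset K /\ mstar (tagged (nth d0 l i)).1)
  /\ z = \sum_(p <- l) eF K p.
Proof.
elim=> [|u v _ [l1 [h1 ->]] _ [l2 [h2 ->]]|L m s sLK hm].
- by exists [::]; rewrite big_nil.
- exists (l1 ++ l2); rewrite big_cat; split => // i; rewrite size_cat nth_cat.
  case: ifP => [/h1 //|hi hi2]; apply: h2.
  by move/negbT: hi; rewrite -leqNgt => hi; rewrite ltn_subLR.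
- exists [:: existT _ L (m, s)]; rewrite big_seq1; split => // i.
  by case: i.
Qed.

Lemma sec_some n H K (L : 'I_n -> {group gT}) O C :
  K \subset H -> (forall i, L i \subset K) -> O \in sec_orbits H K L ->
  C \in lcosets K H ->
  exists p, pickd [ffun=> None] O C = Some p /\ repr p.2 \in H.
Proof.
move=> sKH sLK /imsetP [s0]; rewrite inE => hs0 -> /lcosetsP [y yH ->].
rewrite /pickd; case: pickP => [s' /imsetP [h hH ->] | /(_ (sec_act 1%g s0))]; last first.
  by move=> h; move: h (imset_f (fun h => sec_act h s0) (group1 H)) => ->.
rewrite /sec_act ffunE -lcosetM.
move/forallP: hs0 => /(_ ((h^-1 * y) *: K)%g).
have hc : ((h^-1 * y) *: K)%g \in lcosets K H.
  by apply/lcosetsP; exists (h^-1 * y)%g => //; rewrite groupM ?groupV.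
case: (s0 _) => [[i D]|] /=; last by rewrite hc.
case/and3P => _ /lcosetsP [y' y'H ->] _.
exists (i, (h *: (y' *: L i)))%g; split => //=.
rewrite -lcosetM.
have : repr ((h * y') *: L i)%g \in ((h * y') *: L i)%g by apply: (mem_repr (h * y')%g); exact: lcoset_refl.
case/lcosetP => w wL ->.
by rewrite !groupM //; apply: (subsetP (subset_trans (sLK i) sKH)).
Qed.


Lemma Aset_nm H K (z : Tf K) : K \subset H -> H \subset G -> Aset z -> Aset (NM H K z).
Proof.
move=> sKH sHG /Aset_list [l [hl ->]].
have sKG := subset_trans sKH sHG.
rewrite (big_nth d0) big_mkord.
pose Lf := fun i : 'I_(size l) => tag (nth d0 l i).
pose af := fun i : 'I_(size l) => ((tagged (nth d0 l i)).1 * (tagged (nth d0 l i)).2 : Tf (Lf i)).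
have hLf : forall i, Lf i \subset K by move=> i; case: (hl i (ltn_ord i)).
change (Aset (NM H K (\sum_(i < size l) TR K (Lf i) (af i)))).
rewrite (recip af sKH sHG hLf).
apply: Aset_sum => O HO.
set s := pickd _ O.
set S := sec_stab H s.
have sSH : S \subset H.
  by rewrite /S /sec_stab /= gen_subG; apply/subsetP => h; rewrite inE => /andP[].
have sSG := subset_trans sSH sHG.
pose Om0 := [set (y *: (K : {set gT}))%g | y in S].
have Om0in : Om0 \in coset_orbits S K H.
  apply/imsetP; exists (K : {set gT}) => //.
  by apply/lcosetsP; exists 1%g; rewrite ?group1 ?lcoset1.
rewrite (bigD1 Om0) //=.
have hC : pickd set0 Om0 \in lcosets K H.
  rewrite /pickd; case: pickP => [C /imsetP [y yS ->] | ].
    by apply/lcosetsP; exists y => //; exact: (subsetP sSH).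
  have : (1 *: (K : {set gT}))%g \in Om0 := imset_f _ (group1 S).
  by rewrite lcoset1 => h /(_ (K : {set gT})); rewrite h.
have [p [hp pH]] := sec_some sKH hLf HO hC.
rewrite /recip_factor hp /=.
set g := repr p.2.
have gG : g \in G := subsetP sHG _ pH.
have sLiG : Lf p.1 \subset G := subset_trans (hLf p.1) sKG.
have sCG : cgrp g (Lf p.1) \subset G := cgrpG gG sLiG.
rewrite /af cjM // resM; [|by rewrite /= subsetIr|by []].
rewrite nmM; [|by rewrite /= subsetIl|by []].
rewrite -mulrA; apply: A1 => //.
apply: ms_nm; [by rewrite /= subsetIl | by [] |].
apply: ms_res; [by rewrite /= subsetIr | by [] |].
apply: ms_cj => //.
by case: (hl p.1 (ltn_ord p.1)).
Qed.


Lemma Aset_ideal : tambara_ideal (Tf := Tf) (fun K (z : Tf K) => Aset z).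
Proof.
split.
- move=> H sHG; split; [exact: A0 | move=> ????; exact: AD | move=> ???; exact: Aset_mul].
- move=> H K z sKH sHG; exact: Aset_res.
- move=> H K z sKH sHG; exact: Aset_tr.
- move=> H K z sKH sHG; exact: Aset_nm.
- move=> g H z gG sHG; exact: Aset_cj.
Qed.

Lemma prin_Aset K (z : Tf K) : tideal_prin x K z -> Aset z.
Proof. by move=> h; apply: (h (fun K (z : Tf K) => Aset z)); [exact: Aset_ideal | exact: Aset_x]. Qed.

Lemma mt_prin K (m : Tf K) : K \subset G -> mult_translate x m -> tideal_prin x K m.
Proof.
move=> sKG [K' [g [sK gG sX ->]]] I [_ hres _ hnm hcj] hx.
have sK'G := subset_trans sK sH0G.
apply: hnm => //; apply: hcj => //; exact: hres.
Qed.

End MS.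

Lemma gen_ideal (S : tfamily Tf) : tambara_ideal (tideal_gen S).
Proof.
split.
- move=> H sHG; split.
  + by move=> I [hr _ _ _ _] _; case: (hr H sHG).
  + by move=> u v hu hv I hI hS; case: (hI) => hr _ _ _ _; case: (hr H sHG) => _ hD _; apply: hD; [apply: hu | apply: hv].
  + by move=> r u hu I hI hS; case: (hI) => hr _ _ _ _; case: (hr H sHG) => _ _ hM; apply: hM; apply: hu.
- by move=> H K u sKH sHG hu I hI hS; case: (hI) => _ hres _ _ _; apply: hres => //; apply: hu.
- by move=> H K u sKH sHG hu I hI hS; case: (hI) => _ _ htr _ _; apply: htr => //; apply: hu.
- by move=> H K u sKH sHG hu I hI hS; case: (hI) => _ _ _ hnm _; apply: hnm => //; apply: hu.
- by move=> g H u gG sHG hu I hI hS; case: (hI) => _ _ _ _ hcj; apply: hcj => //; apply: hu.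
Qed.

Section Main.
Variables (H1 H2 : {group gT}) (hH1 : H1 \subset G) (hH2 : H2 \subset G) (a : Tf H1) (b : Tf H2).
Local Notation Jf := (tideal_gen (gen_products a b)).

Lemma Jring K : K \subset G -> ring_ideal (Jf K).
Proof. by move=> sKG; case: (gen_ideal (gen_products a b)) => hr _ _ _ _; apply: hr. Qed.

Lemma key1 L (m m' : Tf L) : L \subset G -> mstar a m -> mstar b m' -> Jf L (m * m').
Proof.
move=> sLG hm; case: (Jring sLG) => _ _ hM.
elim: hm m' => [m0 hm0 | u1 u2 _ IH1 _ IH2] m' hm'.
  elim: hm' => [n0 hn0 | v1 v2 _ IHv1 _ IHv2].
    move=> I hI hS; apply: hS => //; split => //; exists m0, n0; split => //.
  by rewrite mulrA mulrC; apply: hM.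
by rewrite -mulrA; apply: hM; apply: IH2.
Qed.

Lemma key2 L (m w : Tf L) : L \subset G -> mstar a m -> Aset b w -> Jf L (m * w).
Proof.
move=> sLG hm; case: (Jring sLG) => h0 hD hM.
case: (gen_ideal (gen_products a b)) => _ _ htr _ _.
elim=> [|u v _ hu _ hv|L' m' s sL' hm'].
- by rewrite mulr0.
- by rewrite mulrDr; apply: hD.
have sL'G := subset_trans sL' sLG.
rewrite mulrC -frob //; apply: htr => //.
rewrite mulrAC mulrC [m' * _]mulrC; case: (Jring sL'G) => _ _ hM'; apply: hM'.
by apply: key1 => //; apply: ms_res.
Qed.

Lemma key3 K (u v : Tf K) : K \subset G -> Aset a u -> Aset b v -> Jf K (u * v).
Proof.
move=> sKG hu hv; case: (Jring sKG) => h0 hD hM.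
case: (gen_ideal (gen_products a b)) => _ _ htr _ _.
elim: hu => [|u1 u2 _ h1 _ h2|L m s sLK hm].
- by rewrite mul0r.
- by rewrite mulrDl; apply: hD.
have sLG := subset_trans sLK sKG.
rewrite -frob //; apply: htr => //.
rewrite mulrAC mulrC; case: (Jring sLG) => _ _ hM'; apply: hM'.
by apply: key2 => //; apply: Aset_res.
Qed.

Lemma main_eq L (z : Tf L) : L \subset G ->
    tideal_prod (tideal_prin a) (tideal_prin b) L z <-> tideal_gen (gen_products a b) L z.
Proof.
move=> sLG; split.
- move=> h; apply: h; first exact: gen_ideal.
  move=> K sKG w [n [u [v [huv ->]]]].
  case: (Jring sKG) => h0 hD hM.
  apply: big_ind => // k _.
  case: (huv k) => hu hv.
  by apply: key3 => //; apply: prin_Aset.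
- move=> h I hI hS; apply: h => // K sKG w [_ [mu [nu [hmu hnu ->]]]].
  apply: hS => //; exists 1%N, (fun _ => mu), (fun _ => nu); split; last by rewrite big_ord1.
  by move=> _; split; apply: mt_prin.
Qed.

End Main.
End P.

Close Scope ring_scope.

Theorem corollary4p19 (gT : finGroupType) (G : {group gT}) (Tf : tambara G)
    (H1 H2 : {group gT}) (hH1 : H1 \subset G) (hH2 : H2 \subset G)
    (a : Tf H1) (b : Tf H2) :
  forall (L : {group gT}), L \subset G -> forall z : Tf L,
    tideal_prod (tideal_prin a) (tideal_prin b) L z <-> tideal_gen (gen_products a b) L z.
Proof.
move=> L sLG z; exact: (main_eq hH1 hH2 a b z sLG).
Qed.
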